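(* Let $G$ be a graph with no isolated vertex and let $H$ be a nontrivial graph (i.e., of order at least two) such that $\gamma_I(H)\ne 3$ or $\gamma(H)\ne 3$. Then: (i) if $\gamma(H)=1$, then $\gamma_I(G\circ H)=\gamma_{(2,1,0)}(G)$; (ii) if $\gamma_2(H)=\gamma(H)=2$, then $\gamma_I(G\circ H)=\gamma_{(2,2,0)}(G)$; (iii) if $\gamma_2(H)>\gamma(H)=2$, then $\gamma_I(G\circ H)=\gamma_{(2,2,1)}(G)$; (iv) if $\gamma(H)\ge 3$, then $\gamma_I(G\circ H)=\gamma_{(2,2,2)}(G)$.
   Context: All graphs are finite and simple; $N(v)$ denotes the open neighbourhood of a vertex $v$. For an integer $l\ge1$ and a vector $w=(w_0,\dots,w_l)$ of nonnegative integers with $w_0\ge 1$, a function $f:V(G)\to\{0,1,\dots,l\}$ is a $w$-dominating function on $G$ if $\sum_{u\in N(v)}f(u)\ge w_i$ for every vertex $v$ with $f(v)=i$ ($i=0,\dots,l$). The weight of $f$ is $\omega(f)=\sum_{v\in V(G)}f(v)$, and the $w$-domination number $\gamma_w(G)=\gamma_{(w_0,\dots,w_l)}(G)$ is the minimum weight of a $w$-dominating function on $G$. The Italian domination number is $\gamma_I(G)=\gamma_{(2,0,0)}(G)$, i.e., the minimum weight of $f:V(G)\to\{0,1,2\}$ with $\sum_{u\in N(v)}f(u)\ge 2$ for every $v$ with $f(v)=0$. $\gamma(H)$ is the domination number of $H$, and $\gamma_2(H)$ is the $2$-domination number: the minimum cardinality of a set $S\subseteq V(H)$ such that every vertex not in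 $S$ has at least two neighbours in $S$. The lexicographic product $G\circ H$ has vertex set $V(G)\times V(H)$, with $(u,v)(x,y)$ an edge iff $ux\in E(G)$, or $u=x$ and $vy\in E(H)$. *)

(* Defs.v *)
From mathcomp Require Import all_boot.
Set Implicit Arguments. Unset Strict Implicit. Unset Printing Implicit Defensive.

Definition simple_graph (T : finType) (e : rel T) : Prop :=
  symmetric e /\ irreflexive e.

Definition no_isolated (T : finType) (e : rel T) : Prop :=
  forall v : T, exists u : T, e v u.

(* w = (w_0, ..., w_l) is represented by the list w with size w = l + 1;
   a function f : V -> {0,...,l} is an ffun into 'I_(size w). *)
Definition nbsum (T : finType) (e : rel T) (n : nat) (f : {ffun T -> 'I_n}) (v : T) : nat :=
  \sum_(u | e v u) (f u : nat).

Definition is_wdom (T : finType) (e : rel T) (w : seq nat)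
    (f : {ffun T -> 'I_(size w)}) : bool :=
  [forall v, nth 0 w (f v) <= nbsum e f v].

Definition weight (T : finType) (n : nat) (f : {ffun T -> 'I_n}) : nat :=
  \sum_v (f v : nat).

(* Minimum weight of a w-dominating function (0 if none exists; every
   weight is at most (size w).-1 * #|T|, so that bound is a neutral start). *)
Definition gamma_w (T : finType) (e : rel T) (w : seq nat) : nat :=
  \big[minn/((size w).-1 * #|T|)]_(f : {ffun T -> 'I_(size w)} | is_wdom e f) weight f.

Definition gamma_I (T : finType) (e : rel T) : nat := gamma_w e [:: 2; 0; 0].

Definition is_kdom (T : finType) (e : rel T) (k : nat) (S : {set T}) : bool :=
  [forall v, (v \notin S) ==> (k <= #|[set u in S | e v u]|)].

Definition gamma_k (T : finType) (e : rel T) (k : nat) : nat :=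
  \big[minn/#|T|]_(S : {set T} | is_kdom e k S) #|S|.

Definition gamma (T : finType) (e : rel T) : nat := gamma_k e 1.
Definition gamma_2 (T : finType) (e : rel T) : nat := gamma_k e 2.

Definition lexprod (T1 T2 : finType) (e1 : rel T1) (e2 : rel T2) : rel (T1 * T2) :=
  fun p q => e1 p.1 q.1 || ((p.1 == q.1) && e2 p.2 q.2).

(* Main.v *)
Require Import Defs.
From mathcomp Require Import all_boot zify.
Set Implicit Arguments. Unset Strict Implicit. Unset Printing Implicit Defensive.

Section Gen.
Variable I : finType.

Lemma sub_sum (P Q : pred I) (F : I -> nat) :
  (forall i, P i -> Q i) -> \sum_(i | P i) F i <= \sum_(i | Q i) F i.
Proof.
move=> PQ; rewrite [X in _ <= X](bigID P) /=.
rewrite (eq_bigl P); first exact: leq_addr.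
by move=> i; case Pi: (P i); rewrite ?andbT ?andbF // (PQ _ Pi).
Qed.

Lemma term_le_sum (P : pred I) (F : I -> nat) i : P i -> F i <= \sum_(j | P j) F j.
Proof. by move=> Pi; rewrite (bigD1 i Pi) /= leq_addr. Qed.

Lemma bigmin_le (P : pred I) (F : I -> nat) s i :
  P i -> \big[minn/s]_(j | P j) F j <= F i.
Proof.
move=> Pi; rewrite unlock /=.
have: i \in index_enum I by rewrite mem_index_enum.
elim: (index_enum I) => [|j r IH] //=; rewrite inE => /orP[/eqP<-|ir].
  by rewrite Pi /= geq_minl.
case: (P j) => /=; last exact: IH.
by rewrite geq_min (IH ir) orbT.
Qed.

Lemma bigmin_ge (P : pred I) (F : I -> nat) s n :
  n <= s -> (forall i, P i -> n <= F i) -> n <= \big[minn/s]_(j | P j) F j.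
Proof.
move=> ns nF; elim/big_ind: _ => // x y; rewrite leq_min => -> ->. done.
Qed.

Lemma bigmin_att (P : pred I) (F : I -> nat) s :
  \big[minn/s]_(j | P j) F j = s \/ exists i, P i /\ \big[minn/s]_(j | P j) F j = F i.
Proof.
pose K m := m = s \/ exists i, P i /\ m = F i.
change (K (\big[minn/s]_(j | P j) F j)).
apply: big_ind; first by left.
- move=> x y Hx Hy; case: (leqP x y) => h.
  + exact: Hx.
  + exact: Hy.
- by move=> i Pi; right; exists i.
Qed.

Lemma supp_card (g : I -> nat) : #|[set y | 0 < g y]| <= \sum_y g y.
Proof.
rewrite -sum1_card.
apply: (@leq_trans (\sum_(i in [set y | 0 < g y]) g i)).
  by apply: leq_sum => i; rewrite inE.
exact: sub_sum.
Qed.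

Lemma card_le_NS (e : rel I) (S : {set I}) (h : I -> nat) y :
  (forall u, u \in S -> 1 <= h u) ->
  #|[set u in S | e y u]| <= \sum_(u | e y u) h u.
Proof.
move=> hS; rewrite -sum1_card.
apply: (@leq_trans (\sum_(i in [set u in S | e y u]) h i)).
  by apply: leq_sum => i; rewrite inE => /andP[/hS].
by apply: sub_sum => u; rewrite inE => /andP[].
Qed.

End Gen.

Definition NS (T : finType) (e : rel T) (h : T -> nat) v := \sum_(u | e v u) h u.
Definition mk3 (T : finType) (h : T -> nat) : {ffun T -> 'I_3} := [ffun v => inord (h v)].

Lemma mk3E (T : finType) (h : T -> nat) v : h v <= 2 -> (mk3 h v : nat) = h v.
Proof. by move=> hv; rewrite ffunE inordK. Qed.

Lemma NS_mk3 (T : finType) (e : rel T) h v : (forall u, h u <= 2) -> nbsum e (mk3 h) v = NS e h v.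
Proof. by move=> hb; apply: eq_bigr => u _; rewrite mk3E. Qed.

Lemma weight_mk3 (T : finType) (h : T -> nat) : (forall u, h u <= 2) -> weight (mk3 h) = \sum_v h v.
Proof. by move=> hb; apply: eq_bigr => u _; rewrite mk3E. Qed.

Lemma wdom_mk3 (T : finType) (e : rel T) a b c h : (forall u, h u <= 2) ->
  (forall v, nth 0 [:: a; b; c] (h v) <= NS e h v) -> @is_wdom T e [:: a; b; c] (mk3 h).
Proof.
move=> hb hv; apply/forallP => v; rewrite (NS_mk3 _ _ hb) mk3E //; exact: hv.
Qed.

Definition C (w1 w2 a n : nat) : Prop :=
  [/\ a = 0 -> 2 <= n, a = 1 -> w1 <= n & 2 <= a -> 2 + w2 <= a + n].

Lemma C_mono w1 w2 a n n' : C w1 w2 a n -> n <= n' -> C w1 w2 a n'.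
Proof. case=> h0 h1 h2 nn; split=> H; [move: (h0 H) | move: (h1 H) | move: (h2 H)]; lia. Qed.

Lemma C_big w1 w2 a n : w1 <= 2 -> w2 <= 2 -> 2 <= n -> C w1 w2 a n.
Proof. by move=> *; split=> *; lia. Qed.

Definition Pw (T : finType) (e : rel T) w1 w2 (F : T -> nat) :=
  forall x, C w1 w2 (F x) (NS e F x).

Section Red.
Variables (T : finType) (e : rel T) (w1 w2 : nat).
Hypotheses (sg : simple_graph e) (ni : no_isolated e) (hw1 : w1 <= 2) (hw2 : w2 <= 2).

Lemma step_pres F F' x : Pw e w1 w2 F -> F' x = 2 ->
  (forall u, u != x -> F u = F' u \/ 2 <= NS e F' u) ->
  (forall u, u != x -> F u <= F' u) -> w2 <= NS e F' x -> Pw e w1 w2 F'.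
Proof.
move=> PF Fx H1 H2 Hx v.
case: (eqVneq v x) => [->|vx].
  by rewrite Fx; split=> //; lia.
case evx: (e v x).
  apply: C_big => //; rewrite -Fx; exact: (term_le_sum (P := e v)).
case: (H1 v vx) => [<-|]; last exact: C_big.
apply: (C_mono (PF v)); apply: leq_sum => u euv; apply: H2.
by apply/eqP => ux; rewrite ux evx in euv.
Qed.

Lemma card_dec (F F' : T -> nat) x : F' x <= 2 -> 2 < F x ->
  (forall v, v != x -> 2 < F' v -> 2 < F v) ->
  #|[set v | 2 < F' v]| < #|[set v | 2 < F v]|.
Proof.
move=> h1 h2 h3; rewrite (cardsD1 x [set v | 2 < F v]) inE h2 add1n ltnS.
apply: subset_leq_card; apply/subsetP => v; rewrite !inE => hv.
have vx : v != x by apply/eqP => vx; move: hv; rewrite vx; lia.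
by rewrite vx h3.
Qed.

Lemma base F : (forall x, F x <= 2) -> Pw e w1 w2 F ->
  gamma_w e [:: 2; w1; w2] <= \sum_x F x.
Proof.
move=> hb PF; rewrite -(weight_mk3 hb).
apply: bigmin_le; apply: wdom_mk3 => // v.
case: (PF v) => h0 h1 h2; move: (hb v) h0 h1 h2.
case: (F v) => [|[|[|k]]] //= _; auto.
Qed.

Lemma reduce F : Pw e w1 w2 F -> gamma_w e [:: 2; w1; w2] <= \sum_x F x.
Proof.
move: sg => [sym irr].
suff: forall k F, #|[set x | 2 < F x]| <= k -> Pw e w1 w2 F ->
    gamma_w e [:: 2; w1; w2] <= \sum_x F x by move=> H; apply: H.
elim=> [|k IH] {}F hk PF.
  apply: base => // x; rewrite leqNgt; apply/negP => hx.
  by move: hk; rewrite leqn0 => /eqP/cards0_eq/setP/(_ x); rewrite !inE hx.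
case: (boolP [forall x, F x <= 2]) => [/forallP hb|]; first exact: base.
rewrite negb_forall => /existsP[x]; rewrite -ltnNge => Fx.
case: (leqP w2 (NS e F x)) => hNS.
- pose F' v := if v == x then 2 else F v.
  have F'x : F' x = 2 by rewrite /F' eqxx.
  have F'v : forall v, v != x -> F' v = F v by move=> v /negbTE; rewrite /F' => ->.
  apply: (@leq_trans (\sum_v F' v)).
    apply: IH.
      rewrite -ltnS; apply: leq_trans hk; apply: (card_dec (x := x)); rewrite ?F'x //.
      by move=> v vx; rewrite F'v.
    apply: (step_pres PF F'x).
    + by move=> u ux; left; rewrite F'v.
    + by move=> u ux; rewrite F'v.
    + apply: (leq_trans hNS); rewrite leq_eqVlt; apply/orP; left; apply/eqP.
      apply: eq_bigr => u exu; rewrite F'v //; apply/eqP => ux.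
      by rewrite ux irr in exu.
  apply: leq_sum => v _; case: (eqVneq v x) => [->|vx]; first by rewrite F'x; lia.
  by rewrite F'v.
- have [x' exx' hx'] : exists2 x', e x x' & NS e F x <= F x'.
    case: (posnP (NS e F x)) => [->|pos].
      by case: (ni x) => u hu; exists u.
    have [u /andP[exu Fu]] : exists u, e x u && (0 < F u).
      apply/existsP; apply: contraTT pos; rewrite negb_exists => /forallP hn.
      rewrite -leqNgt leqn0; apply/eqP; apply: big1 => u exu.
      by move: (hn u); rewrite exu /=; case: (F u).
    by exists u => //; lia.
  have x'x : x' != x by apply/eqP => h; rewrite h irr in exx'.
  have Fx'le : F x' <= NS e F x by exact: (term_le_sum (P := e x)).
  pose F' v := if v == x then 2 else if v == x' then w2 else F v.
  have F'x : F' x = 2 by rewrite /F' eqxx.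
  have F'x' : F' x' = w2 by rewrite /F' (negbTE x'x) eqxx.
  have F'v : forall v, v != x -> v != x' -> F' v = F v.
    by move=> v /negbTE h1 /negbTE h2; rewrite /F' h1 h2.
  apply: (@leq_trans (\sum_v F' v)).
    apply: IH.
      rewrite -ltnS; apply: leq_trans hk; apply: (card_dec (x := x)); rewrite ?F'x //.
      move=> v vx; case: (eqVneq v x') => [->|vx']; first by rewrite F'x'; lia.
      by rewrite F'v.
    apply: (step_pres PF F'x).
    + move=> u ux; case: (eqVneq u x') => [->|ux']; last by left; rewrite F'v.
      right; rewrite -F'x; apply: (term_le_sum (P := e x')); by rewrite sym.
    + move=> u ux; case: (eqVneq u x') => [->|ux']; last by rewrite F'v.
      by rewrite F'x'; lia.
    + by rewrite -F'x'; apply: (term_le_sum (P := e x)).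
  rewrite (bigD1 x) //= [X in _ <= X](bigD1 x) //= (bigD1 x') //= [X in _ <= _ + X](bigD1 x') //=.
  rewrite F'x F'x' addnA [X in _ <= X]addnA leq_add //.
    by case: (PF x) => _ _ /(_ (ltnW Fx)); lia.
  by rewrite leq_eqVlt; apply/orP; left; apply/eqP; apply: eq_bigr => v /andP[h1 h2]; rewrite F'v.
Qed.

End Red.

Lemma NS_lex (T1 T2 : finType) (e1 : rel T1) (e2 : rel T2) (h : T1 * T2 -> nat) x y :
  irreflexive e1 ->
  NS (lexprod e1 e2) h (x, y) = NS e1 (fun a => \sum_b h (a, b)) x + NS e2 (fun b => h (x, b)) y.
Proof.
move=> irr; rewrite /NS /lexprod /=.
transitivity (\sum_a \sum_b (if e1 x a || (x == a) && e2 y b then h (a, b) else 0)).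
  by rewrite pair_bigA big_mkcond /=; apply: eq_bigr => -[a b] _.
rewrite (bigD1 x) //= irr eqxx /= -big_mkcond addnC; congr (_ + _).
rewrite [RHS]big_mkcond [RHS](bigD1 x) //= irr add0n; apply: eq_bigr => a ax.
case: (e1 x a) => //=; rewrite eq_sym (negbTE ax) /=; exact: big1.
Qed.

Lemma weight_lex (T1 T2 : finType) n (f : {ffun T1 * T2 -> 'I_n}) :
  weight f = \sum_a \sum_b (f (a, b) : nat).
Proof. by rewrite /weight pair_bigA; apply: eq_bigr => -[a b]. Qed.

Section H.
Variables (T : finType) (e : rel T).

Lemma gamma_le_card : gamma e <= #|T|.
Proof.
rewrite /gamma /gamma_k -cardsT; apply: bigmin_le.
by apply/forallP => v; rewrite inE.
Qed.

Lemma H1 (g : T -> nat) : (forall y, g y = 0 -> 1 <= NS e g y) -> gamma e <= \sum_y g y.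
Proof.
move=> hg; apply: leq_trans (supp_card g); apply: bigmin_le.
apply/forallP => v; apply/implyP; rewrite inE -eqn0Ngt => /eqP /hg hv.
apply/card_gt0P; apply/existsP; apply: contraTT hv; rewrite negb_exists => /forallP hn.
rewrite -ltnNge ltnS leqn0; apply/eqP; apply: big1 => u evu.
by move: (hn u); rewrite !inE evu andbT -eqn0Ngt => /eqP.
Qed.

Lemma H2 (g : T -> nat) : (forall y, g y = 0 -> 2 <= NS e g y) -> (forall y, g y <= 2) ->
  \sum_y g y <= 2 -> gamma e <= 1 \/ gamma_2 e <= 2.
Proof.
move=> hg hb hs.
case: (boolP [exists y, g y == 2]) => [/existsP[y0 /eqP gy0]|].
  have z : forall b, b != y0 -> g b = 0.
    move=> b by0; move: hs; rewrite (bigD1 y0) //= (bigD1 b) /=; last by rewrite by0.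
    by rewrite gy0; lia.
  left; apply: (@leq_trans #|[set y0]|); last by rewrite cards1.
  apply: bigmin_le; apply/forallP => v; apply/implyP; rewrite inE => vy0.
  move: (hg v (z v vy0)) => hv.
  have evy : e v y0.
    apply: contraTT hv => nev; rewrite -ltnNge ltnS; apply: (@leq_trans 0) => //.
    rewrite leqn0; apply/eqP; apply: big1 => u evu; apply: z; apply/eqP => uy.
    by move: nev; rewrite -uy evu.
  by apply/card_gt0P; exists y0; rewrite !inE eqxx evy.
rewrite negb_exists => /forallP hn.
have b1 : forall y, g y <= 1 by move=> y; move: (hn y) (hb y); lia.
right; apply: (@leq_trans #|[set y | 0 < g y]|); last exact: leq_trans (supp_card g) hs.
apply: bigmin_le; apply/forallP => v; apply/implyP; rewrite inE -eqn0Ngt => /eqP /hg hv.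
apply: (leq_trans hv); rewrite -sum1_card.
apply: (@leq_trans (\sum_(u | e v u) (0 < g u : nat))).
  by apply: leq_sum => u _; move: (b1 u); case: (g u) => [|[|]].
rewrite big_mkcond [X in _ <= X]big_mkcond /=; apply: leq_sum => u _.
by rewrite !inE; case: (e v u); case: (0 < g u); rewrite ?andbT ?andbF.
Qed.

Lemma H3 (g : T -> nat) : (forall y, g y <= 2) -> (forall y, g y = 0 -> 2 <= NS e g y) ->
  gamma_I e <= \sum_y g y.
Proof.
move=> hb hg; rewrite -(weight_mk3 hb); apply: bigmin_le; apply: wdom_mk3 => // v.
move: (hg v); case: (g v) => [|n] /=; first by move=> /(_ erefl).
by case: n => [|[|n]] //= _; rewrite nth_nil.
Qed.

Lemma H4 : gamma e <= gamma_I e.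
Proof.
apply: bigmin_ge; first by apply: leq_trans gamma_le_card _; rewrite /= leq_pmull.
move=> f /forallP hf; apply: H1 => y fy; move: (hf y); rewrite fy /= => h.
by apply: leq_trans h.
Qed.

End H.

Lemma const2_sum (T : finType) : \sum_(v : T) 2 = 2 * #|T|.
Proof. by rewrite sum_nat_const mulnC. Qed.

Lemma gamma_w_att (T : finType) (e : rel T) a b c :
  (forall v, c <= NS e (fun _ => 2) v) ->
  exists g : {ffun T -> 'I_3}, @is_wdom T e [:: a; b; c] g /\ weight g = gamma_w e [:: a; b; c].
Proof.
move=> hc.
have : (fun m => m = 2 * #|T| \/ exists g : {ffun T -> 'I_3}, @is_wdom T e [:: a; b; c] g /\ weight g = m)
   (gamma_w e [:: a; b; c]).
  apply: (@big_ind nat (fun m => m = 2 * #|T| \/ exists g : {ffun T -> 'I_3}, @is_wdom T e [:: a; b; c] g /\ weight g = m)); first by left.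
  - move=> x y Hx Hy; case: (leqP x y) => h; [exact: Hx | exact: Hy].
  - by move=> g hg; right; exists g.
move=> [->|//].
exists (mk3 (fun _ => 2)); split; last by rewrite weight_mk3 // const2_sum.
by apply: wdom_mk3 => // v /=.
Qed.

Lemma gamma_k_att (T : finType) (e : rel T) k :
  exists S : {set T}, is_kdom e k S /\ #|S| = gamma_k e k.
Proof.
have : (fun m => m = #|T| \/ exists S : {set T}, is_kdom e k S /\ #|S| = m) (gamma_k e k).
  apply: (@big_ind nat (fun m => m = #|T| \/ exists S : {set T}, is_kdom e k S /\ #|S| = m)); first by left.
  - move=> x y Hx Hy; case: (leqP x y) => h; [exact: Hx | exact: Hy].
  - by move=> S hS; right; exists S.
move=> [->|//].
by exists setT; split; [apply/forallP => v; rewrite inE | rewrite cardsT].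
Qed.

Lemma sum_ind (T : finType) (S : {set T}) : \sum_b ((b \in S) : nat) = #|S|.
Proof. by rewrite -sum1_card [RHS]big_mkcond; apply: eq_bigr => b _; case: (b \in S). Qed.

Lemma sum_ind1 (T : finType) (a : T) : \sum_b ((b == a) : nat) = 1.
Proof. by rewrite (bigD1 a) //= eqxx big1 // => b /negbTE ->. Qed.

Lemma sum_at (T : finType) (a : T) n : \sum_b (if b == a then n else 0) = n.
Proof. by rewrite (bigD1 a) //= eqxx big1 ?addn0 // => b /negbTE ->. Qed.

Section Main.
Variables (T1 T2 : finType) (e1 : rel T1) (e2 : rel T2).
Hypotheses (sg1 : simple_graph e1) (ni1 : no_isolated e1) (sg2 : simple_graph e2)
  (hT2 : 2 <= #|T2|).

Let irr1 : irreflexive e1. Proof. by case: sg1. Qed.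

Lemma NS_const2 v : 2 <= NS e1 (fun _ => 2) v.
Proof. case: (ni1 v) => u hu; exact: (term_le_sum (P := e1 v) (fun _ => 2) hu). Qed.

Lemma UB w1 w2 : w2 <= 2 ->
  (forall g : {ffun T1 -> 'I_3}, @is_wdom T1 e1 [:: 2; w1; w2] g ->
     exists h : T1 * T2 -> nat, [/\ forall p, h p <= 2,
        forall a, \sum_b h (a, b) = g a &
        forall x y, h (x, y) = 0 -> 2 <= NS e1 (fun a => g a) x + NS e2 (fun b => h (x, b)) y]) ->
  gamma_I (lexprod e1 e2) <= gamma_w e1 [:: 2; w1; w2].
Proof.
move=> hw2 H.
have [g [hg <-]] := @gamma_w_att T1 e1 2 w1 w2 (fun v => leq_trans hw2 (NS_const2 v)).
have [h [hb hs hz]] := H g hg.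
apply: (@leq_trans (weight (mk3 h))).
  apply: bigmin_le; apply: wdom_mk3 => // -[x y].
  rewrite NS_lex //; have -> : NS e1 (fun a => \sum_b h (a, b)) x = NS e1 (fun a => (g a : nat)) x by apply: eq_bigr => a _; exact: hs.
  by case hxy: (h (x, y)) => [|n] /=; [exact: hz | case: n {hxy} => [|[|n]] //=; rewrite nth_nil].
rewrite weight_mk3 // /weight; apply: eq_leq.
rewrite (eq_bigr (fun p => h (p.1, p.2))); last by case.
rewrite -(pair_bigA _ (fun a b => h (a, b))); apply: eq_bigr => a _; exact: hs.
Qed.

Section LBsec.
Variable f : {ffun T1 * T2 -> 'I_3}.
Hypothesis hf : @is_wdom _ (lexprod e1 e2) [:: 2; 0; 0] f.
Let F := fun a => \sum_b (f (a, b) : nat).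
Let gx x := fun b => (f (x, b) : nat).

Lemma Zf x y : gx x y = 0 -> 2 <= NS e1 F x + NS e2 (gx x) y.
Proof.
move=> h0; move/forallP: hf => /(_ (x, y)); rewrite /gx in h0; rewrite h0 /=.
by rewrite -[nbsum _ _ _]/(NS (lexprod e1 e2) (fun p => (f p : nat)) (x, y)) NS_lex.
Qed.

Lemma NSgx x y : NS e2 (gx x) y <= F x.
Proof. exact: sub_sum. Qed.

Lemma gx_le x y : gx x y <= F x.
Proof. exact: (term_le_sum (P := predT) (gx x)). Qed.

Lemma gx_b x y : gx x y <= 2.
Proof. by rewrite /gx; case: (f (x, y)) => /= m; rewrite ltnS. Qed.

Lemma C0 x : F x = 0 -> 2 <= NS e1 F x.
Proof.
move=> h0; have [y _] : exists y : T2, y \in T2 by apply/card_gt0P; apply: leq_trans hT2.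
have := gx_le x y; rewrite h0 leqn0 => /eqP /Zf; have := NSgx x y; lia.
Qed.

Lemma C1a x : F x = 1 -> 1 <= NS e1 F x.
Proof.
move=> h1; case: (boolP [exists y, gx x y == 0]) => [/existsP[y /eqP hy]|].
  have := Zf hy; have := NSgx x y; lia.
rewrite negb_exists => /forallP hn; move: hT2.
have : #|T2| <= F x.
  rewrite -sum1_card; apply: leq_sum => b _; move: (hn b).
  by rewrite lt0n.
lia.
Qed.

Lemma C1b x : 2 <= gamma e2 -> F x = 1 -> 2 <= NS e1 F x.
Proof.
move=> hg h1; rewrite leqNgt; apply/negP => hlt.
have : gamma e2 <= F x.
  apply: (H1 (g := gx x)) => y /Zf; lia.
lia.
Qed.

Lemma C2c x : gamma e2 = 2 -> 2 < gamma_2 e2 -> 2 <= F x -> 3 <= F x + NS e1 F x.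
Proof.
move=> hg hg2 h2; case: (posnP (NS e1 F x)) => [h0|]; last lia.
rewrite h0 addn0 ltnNge; apply/negP => hle.
have : gamma e2 <= 1 \/ gamma_2 e2 <= 2.
  apply: (H2 (g := gx x)) => //; [by move=> y /Zf; rewrite h0 | exact: gx_b].
lia.
Qed.

Lemma C2d x : 3 <= gamma e2 -> (gamma_I e2 <> 3 \/ gamma e2 <> 3) ->
  2 <= F x -> 4 <= F x + NS e1 F x.
Proof.
move=> hg hyp h2; case: (leqP 2 (NS e1 F x)) => hn; first lia.
case: (posnP (NS e1 F x)) => [h0|hp].
  have gI : gamma_I e2 <= F x.
    apply: (H3 (g := gx x)); [exact: gx_b | by move=> y /Zf; rewrite h0].
  have := H4 e2; lia.
have : gamma e2 <= F x by apply: (H1 (g := gx x)) => y /Zf; lia.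
lia.
Qed.

End LBsec.

Lemma LB w1 w2 : w1 <= 2 -> w2 <= 2 ->
  (forall f : {ffun T1 * T2 -> 'I_3}, @is_wdom _ (lexprod e1 e2) [:: 2; 0; 0] f ->
     Pw e1 w1 w2 (fun a => \sum_b (f (a, b) : nat))) ->
  gamma_w e1 [:: 2; w1; w2] <= gamma_I (lexprod e1 e2).
Proof.
move=> hw1 hw2 H.
rewrite /gamma_I; have [f [hf <-]] := @gamma_w_att _ (lexprod e1 e2) 2 0 0 (fun v => leq0n _).
rewrite weight_lex; exact: reduce (H f hf).
Qed.

End Main.

Lemma wd_at (T : finType) (e : rel T) w1 w2 (g : {ffun T -> 'I_3}) x :
  @is_wdom T e [:: 2; w1; w2] g ->
  [/\ (g x : nat) = 0 -> 2 <= NS e (fun a => (g a : nat)) x,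
      (g x : nat) = 1 -> w1 <= NS e (fun a => (g a : nat)) x &
      (g x : nat) = 2 -> w2 <= NS e (fun a => (g a : nat)) x].
Proof.
move/forallP/(_ x) => H; rewrite -[nbsum _ _ _]/(NS e (fun a => (g a : nat)) x) in H.
by split=> h; move: H; rewrite h.

Qed.

Section Main2.
Variables (T1 T2 : finType) (e1 : rel T1) (e2 : rel T2).
Hypotheses (sg1 : simple_graph e1) (ni1 : no_isolated e1) (sg2 : simple_graph e2)
  (hT2 : 2 <= #|T2|).

Lemma caseA w1 w2 a : w2 <= 2 ->
  (forall g : {ffun T1 -> 'I_3}, @is_wdom T1 e1 [:: 2; w1; w2] g -> forall x y,
     0 < g x -> y != a -> 2 <= NS e1 (fun a => (g a : nat)) x + (if e2 y a then (g x : nat) else 0)) ->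
  gamma_I (lexprod e1 e2) <= gamma_w e1 [:: 2; w1; w2].
Proof.
move=> hw2 Hc; apply: UB => // g hg.
exists (fun p => if p.2 == a then (g p.1 : nat) else 0); split.
- by move=> p; case: (_ == _) => //; rewrite -ltnS.
- by move=> x /=; rewrite sum_at.
move=> x y /=; case: (posnP (g x)) => [g0 _|gp].
  by case: (wd_at x hg) => /(_ g0) h _ _; apply: leq_trans h (leq_addr _ _).
case: (eqVneq y a) => [->|ya]; first by move=> h; move: gp; rewrite h.
move=> _; apply: (leq_trans (Hc g hg x y gp ya)); rewrite leq_add2l.
case eya: (e2 y a) => //.
by have := term_le_sum (P := e2 y) (fun b => if b == a then (g x : nat) else 0) eya; rewrite eqxx.
Qed.

Lemma caseB w1 w2 k (S : {set T2}) a : w2 <= 2 -> a \in S -> #|S| = 2 -> is_kdom e2 k S ->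
  (forall g : {ffun T1 -> 'I_3}, @is_wdom T1 e1 [:: 2; w1; w2] g -> forall x,
     (g x : nat) = 1 -> 2 <= NS e1 (fun a => (g a : nat)) x) ->
  (forall g : {ffun T1 -> 'I_3}, @is_wdom T1 e1 [:: 2; w1; w2] g -> forall x,
     (g x : nat) = 2 -> 2 <= NS e1 (fun a => (g a : nat)) x + k) ->
  gamma_I (lexprod e1 e2) <= gamma_w e1 [:: 2; w1; w2].
Proof.
move=> hw2 aS cS kS H1c H2c; apply: UB => // g hg.
exists (fun p => if (g p.1 : nat) == 2 then ((p.2 \in S) : nat)
                 else if (g p.1 : nat) == 1 then ((p.2 == a) : nat) else 0); split.
- by move=> p; case: ifP => _; [case: (p.2 \in S) | case: ifP => _; [case: (p.2 == a) | ]].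
- move=> x /=; case: eqP => [->|h1]; first by rewrite sum_ind cS.
  case: eqP => [->|h2]; first by rewrite sum_ind1.
  rewrite big1 //; move: (ltn_ord (g x)) h1 h2; lia.
move=> x y /=; case: (eqVneq (g x : nat) 2) => [g2|].
  case yS: (y \in S) => // _; move/forallP: kS => /(_ y); rewrite yS /= => hk.
  have := H2c g hg x g2.
  have : #|[set u in S | e2 y u]| <= NS e2 (fun b => ((b \in S) : nat)) y.
    by apply: card_le_NS => u uS; rewrite uS.
  lia.
move=> g2; case: (eqVneq (g x : nat) 1) => [g1|g1].
  by move=> _; apply: leq_trans (H1c g hg x g1) (leq_addr _ _).
move=> _; have g0 : (g x : nat) = 0 by move: (ltn_ord (g x)) g1 g2; lia.
by case: (wd_at x hg) => /(_ g0) h _ _; apply: leq_trans h (leq_addr _ _).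
Qed.

End Main2.


Unset Implicit Arguments.
Theorem theorem2 (T1 T2 : finType) (e1 : rel T1) (e2 : rel T2) :
  simple_graph e1 -> no_isolated e1 ->
  simple_graph e2 -> 2 <= #|T2| ->
  (gamma_I e2 <> 3 \/ gamma e2 <> 3) ->
  [/\ (gamma e2 = 1 -> gamma_I (lexprod e1 e2) = gamma_w e1 [:: 2; 1; 0]),
      (gamma_2 e2 = 2 -> gamma e2 = 2 ->
         gamma_I (lexprod e1 e2) = gamma_w e1 [:: 2; 2; 0]),
      (gamma e2 = 2 -> 2 < gamma_2 e2 ->
         gamma_I (lexprod e1 e2) = gamma_w e1 [:: 2; 2; 1])
    & (3 <= gamma e2 -> gamma_I (lexprod e1 e2) = gamma_w e1 [:: 2; 2; 2])].
Proof.
move=> sg1 ni1 sg2 hT2 hyp.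
have [a0 _] : exists y : T2, y \in T2 by apply/card_gt0P; apply: leq_trans hT2.
split.
- move=> hg; apply/eqP; rewrite eqn_leq; apply/andP; split.
    have [S [kS cS]] := gamma_k_att e2 1.
    move: cS; rewrite -/(gamma e2) hg => /eqP /cards1P [a Sa].
    apply: (@caseA _ _ e1 e2 sg1 ni1 _ _ a) => // g hg' x y gp ya.
    move/forallP: kS => /(_ y); rewrite Sa inE ya /= => /card_gt0P [u].
    rewrite !inE => /andP [/eqP -> ->].
    case: (wd_at x hg') => _ h1 _; move: (ltn_ord (g x)) gp h1; case: (g x) => -[|[|[|]]] //= _ _ _.
      by move=> /(_ erefl); lia.
    by lia.
  apply: LB => // f hf x; split.
  + exact: (C0 sg1 hT2 hf).
  + exact: (C1a sg1 hT2 hf).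
  + lia.
- move=> hg2 hg; apply/eqP; rewrite eqn_leq; apply/andP; split.
    have [S [kS cS]] := gamma_k_att e2 2.
    move: cS; rewrite -/(gamma_2 e2) hg2 => cS.
    have [a aS] : exists a, a \in S by apply/card_gt0P; rewrite cS.
    apply: (@caseB _ _ e1 e2 sg1 ni1 hT2 _ _ 2 S a _ aS cS kS) => // g hg' x g2.
      by case: (wd_at x hg') => _ /(_ g2).
    lia.
  apply: LB => // f hf x; split.
  + exact: (C0 sg1 hT2 hf).
  + by apply: (C1b sg1 hT2 hf) => //; rewrite hg.
  + lia.
- move=> hg hg2; apply/eqP; rewrite eqn_leq; apply/andP; split.
    have [S [kS cS]] := gamma_k_att e2 1.
    move: cS; rewrite -/(gamma e2) hg => cS.
    have [a aS] : exists a, a \in S by apply/card_gt0P; rewrite cS.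
    apply: (@caseB _ _ e1 e2 sg1 ni1 hT2 _ _ 1 S a _ aS cS kS) => // g hg' x g2.
      by case: (wd_at x hg') => _ /(_ g2).
    by case: (wd_at x hg') => _ _ /(_ g2); lia.
  apply: LB => // f hf x; split.
  + exact: (C0 sg1 hT2 hf).
  + by apply: (C1b sg1 hT2 hf) => //; rewrite hg.
  + exact: (C2c sg1 hT2 hf).
- move=> hg; apply/eqP; rewrite eqn_leq; apply/andP; split.
    apply: (@caseA _ _ e1 e2 sg1 ni1 _ _ a0) => // g hg' x y gp ya.
    case: (wd_at x hg') => _ h1 h2; move: (ltn_ord (g x)) gp h1 h2; case: (g x) => -[|[|[|]]] //= _ _ _.
      by move=> /(_ erefl); lia.
    by move=> _ /(_ erefl); lia.
  apply: LB => // f hf x; split.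
  + exact: (C0 sg1 hT2 hf).
  + by apply: (C1b sg1 hT2 hf) => //; lia.
  + exact: (C2d sg1 hT2 hf).
Qed.
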